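(* Let $B\in M_2(\mathbb{Z})$ be an expanding matrix whose characteristic polynomial is $x^2-px+q$ with $p$ a positive integer and $q\in\{3,-3\}$. Let $k\in\mathbb{Z}\setminus\{0\}$ and let $v\in\mathbb{R}^2$ be such that $\{v,Bv\}$ is linearly independent. Let $\mathcal{D}=\{0,v,kBv\}$. Then $T(B,\mathcal{D})$ is connected if and only if $k=\pm1$.
   Context: A real square matrix is expanding if all its eigenvalues have modulus strictly larger than $1$. For an expanding matrix $A\in M_n(\mathbb{Z})$ and a finite set $\mathcal{D}\subset\mathbb{R}^n$ with $|\mathcal D|=|\det A|$, the self-affine set $T(A,\mathcal{D})$ is the unique nonempty compact set $T$ with $AT=T+\mathcal{D}$; equivalently $T=\{\sum_{i=1}^\infty A^{-i}d_{j_i}: d_{j_i}\in\mathcal{D}\}$. *)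

(* Defs.v *)
From Stdlib Require Import Reals Lra ZArith List.
Open Scope R_scope.

Definition vec := (R * R)%type.
Definition vzero : vec := (0, 0).
Definition vadd (u w : vec) : vec := (fst u + fst w, snd u + snd w).
Definition vscale (a : R) (u : vec) : vec := (a * fst u, a * snd u).

Definition mat := ((R * R) * (R * R))%type.
Definition m11 (M : mat) := fst (fst M).
Definition m12 (M : mat) := snd (fst M).
Definition m21 (M : mat) := fst (snd M).
Definition m22 (M : mat) := snd (snd M).
Definition mat_vec (M : mat) (u : vec) : vec :=
  (m11 M * fst u + m12 M * snd u, m21 M * fst u + m22 M * snd u).
Definition mat_det (M : mat) : R := m11 M * m22 M - m12 M * m21 M.
Definition mat_tr (M : mat) : R := m11 M + m22 M.
(* inverse of a 2x2 matrix (meaningful when det <> 0) *)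
Definition mat_inv (M : mat) : mat :=
  let d := mat_det M in
  ((m22 M / d, - m12 M / d), (- m21 M / d, m11 M / d)).
Fixpoint mat_pow_vec (M : mat) (n : nat) (u : vec) : vec :=
  match n with O => u | S n' => mat_vec M (mat_pow_vec M n' u) end.

Definition zmat := ((Z * Z) * (Z * Z))%type.
Definition zmat_R (B : zmat) : mat :=
  ((IZR (fst (fst B)), IZR (snd (fst B))), (IZR (fst (snd B)), IZR (snd (snd B)))).

(* Eigenvalues of a real 2x2 matrix M: complex numbers lam = x + i y with
   det(M - lam I) = (m11 - lam)(m22 - lam) - m12 m21 = 0, written out in
   real and imaginary parts. *)
Definition is_eigenvalue (M : mat) (x y : R) : Prop :=
  (m11 M - x) * (m22 M - x) - y * y - m12 M * m21 M = 0 /\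
  - y * (m22 M - x) - y * (m11 M - x) = 0.

Definition expanding (M : mat) : Prop :=
  forall x y : R, is_eigenvalue M x y -> x * x + y * y > 1.

(* Partial sums  sum_{i=1}^{N+1} A^{-i} dig_{i-1} *)
Fixpoint partial_sum (Ainv : mat) (dig : nat -> vec) (N : nat) : vec :=
  match N with
  | O => mat_pow_vec Ainv 1 (dig O)
  | S N' => vadd (partial_sum Ainv dig N') (mat_pow_vec Ainv (S N) (dig N))
  end.

Definition vec_cv (u : nat -> vec) (l : vec) : Prop :=
  Un_cv (fun n => fst (u n)) (fst l) /\ Un_cv (fun n => snd (u n)) (snd l).

Definition self_affine_set (A : mat) (D : list vec) (x : vec) : Prop :=
  exists dig : nat -> vec,
    (forall n, In (dig n) D) /\ vec_cv (partial_sum (mat_inv A) dig) x.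

Definition dist2 (u w : vec) : R :=
  sqrt ((fst u - fst w) ^ 2 + (snd u - snd w) ^ 2).
Definition open2 (U : vec -> Prop) : Prop :=
  forall x, U x -> exists eps, eps > 0 /\ forall y, dist2 x y < eps -> U y.
Definition connected2 (S : vec -> Prop) : Prop :=
  ~ exists U V : vec -> Prop,
      open2 U /\ open2 V /\
      (forall x, S x -> U x \/ V x) /\
      (exists x, S x /\ U x) /\ (exists x, S x /\ V x) /\
      (forall x, S x -> U x -> V x -> False).

Definition lin_indep2 (u w : vec) : Prop :=
  forall a b : R, vadd (vscale a u) (vscale b w) = vzero -> a = 0 /\ b = 0.

(* Main.v *)
Require Import Defs.
From Stdlib Require Import Reals ZArith List.
Import ListNotations.
Open Scope R_scope.
From Stdlib Require Import Lra Lia Psatz Classical ClassicalEpsilon.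

Lemma vec_ext (u w : vec) : fst u = fst w -> snd u = snd w -> u = w.
Proof. destruct u, w; simpl; intros; subst; reflexivity. Qed.

Definition vsub (u w : vec) : vec := (fst u - fst w, snd u - snd w).

Lemma mat_vec_add M u w : mat_vec M (vadd u w) = vadd (mat_vec M u) (mat_vec M w).
Proof. apply vec_ext; unfold mat_vec, vadd; simpl; ring. Qed.
Lemma mat_vec_scale M c u : mat_vec M (vscale c u) = vscale c (mat_vec M u).
Proof. apply vec_ext; unfold mat_vec, vscale; simpl; ring. Qed.
Lemma mat_vec_sub M u w : mat_vec M (vsub u w) = vsub (mat_vec M u) (mat_vec M w).
Proof. apply vec_ext; unfold mat_vec, vsub; simpl; ring. Qed.
Lemma mat_vec_zero M : mat_vec M vzero = vzero.
Proof. apply vec_ext; unfold mat_vec, vzero; simpl; ring. Qed.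

Lemma pow_vec_add M n u w : mat_pow_vec M n (vadd u w) = vadd (mat_pow_vec M n u) (mat_pow_vec M n w).
Proof. induction n; simpl; auto. rewrite IHn, mat_vec_add; auto. Qed.
Lemma pow_vec_sub M n u w : mat_pow_vec M n (vsub u w) = vsub (mat_pow_vec M n u) (mat_pow_vec M n w).
Proof. induction n; simpl; auto. rewrite IHn, mat_vec_sub; auto. Qed.
Lemma pow_vec_scale M n c u : mat_pow_vec M n (vscale c u) = vscale c (mat_pow_vec M n u).
Proof. induction n; simpl; auto. rewrite IHn, mat_vec_scale; auto. Qed.
Lemma pow_vec_zero M n : mat_pow_vec M n vzero = vzero.
Proof. induction n; simpl; auto. rewrite IHn, mat_vec_zero; auto. Qed.
Lemma pow_vec_comp M n m u : mat_pow_vec M n (mat_pow_vec M m u) = mat_pow_vec M (n + m) u.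
Proof. induction n; simpl; auto. rewrite IHn; auto. Qed.
Lemma pow_vec_succ_r M n u : mat_pow_vec M n (mat_vec M u) = mat_pow_vec M (S n) u.
Proof. induction n; simpl; auto. rewrite IHn; auto. Qed.

Lemma pow_vec_comm M n u : mat_pow_vec M n (mat_vec M u) = mat_vec M (mat_pow_vec M n u).
Proof. induction n; simpl; auto. rewrite IHn; auto. Qed.

Lemma pow_vec_linear M n : exists a b c d, forall x,
  mat_pow_vec M n x = (a * fst x + b * snd x, c * fst x + d * snd x).
Proof.
  induction n.
  - exists 1, 0, 0, 1. intros [x y]; simpl; apply vec_ext; simpl; ring.
  - destruct IHn as (a & b & c & d & H).
    exists (m11 M * a + m12 M * c), (m11 M * b + m12 M * d),
           (m21 M * a + m22 M * c), (m21 M * b + m22 M * d).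
    intros x; simpl; rewrite H; unfold mat_vec; apply vec_ext; simpl; ring.
Qed.

Lemma cv_const (c : R) : Un_cv (fun _ => c) c.
Proof. intros e He; exists 0%nat; intros; unfold Rdist; rewrite Rminus_diag, Rabs_R0; lra. Qed.

Lemma cv_lin (u w : nat -> R) a b c l1 l2 :
  Un_cv u l1 -> Un_cv w l2 -> Un_cv (fun n => a * u n + b * w n + c) (a * l1 + b * l2 + c).
Proof.
  intros H1 H2.
  apply CV_plus; [apply CV_plus|apply cv_const];
  apply CV_mult; auto; apply cv_const.
Qed.

Lemma vec_cv_unique u x y : vec_cv u x -> vec_cv u y -> x = y.
Proof.
  intros [H1 H2] [H3 H4]; apply vec_ext; eapply UL_sequence; eauto.
Qed.

Lemma vec_cv_add u w x y : vec_cv u x -> vec_cv w y -> vec_cv (fun n => vadd (u n) (w n)) (vadd x y).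
Proof.
  intros [H1 H2] [H3 H4]; split; simpl; apply CV_plus; auto.
Qed.

Lemma vec_cv_sub u w x y : vec_cv u x -> vec_cv w y -> vec_cv (fun n => vsub (u n) (w n)) (vsub x y).
Proof.
  intros [H1 H2] [H3 H4]; split; simpl.
  - pose proof (cv_lin _ _ 1 (-1) 0 _ _ H1 H3) as H. simpl in H.
    replace (fst x - fst y) with (1 * fst x + -1 * fst y + 0) by ring.
    intros e He; destruct (H e He) as [N HN]; exists N; intros n Hn.
    replace (fst (u n) - fst (w n)) with (1 * fst (u n) + -1 * fst (w n) + 0) by ring. auto.
  - pose proof (cv_lin _ _ 1 (-1) 0 _ _ H2 H4) as H. simpl in H.
    replace (snd x - snd y) with (1 * snd x + -1 * snd y + 0) by ring.
    intros e He; destruct (H e He) as [N HN]; exists N; intros n Hn.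
    replace (snd (u n) - snd (w n)) with (1 * snd (u n) + -1 * snd (w n) + 0) by ring. auto.
Qed.

Lemma vec_cv_const (c : vec) : vec_cv (fun _ => c) c.
Proof. split; apply cv_const. Qed.

Lemma vec_cv_pow u x M n : vec_cv u x -> vec_cv (fun m => mat_pow_vec M n (u m)) (mat_pow_vec M n x).
Proof.
  intros [H1 H2]. destruct (pow_vec_linear M n) as (a & b & c & d & H).
  rewrite H. split; simpl.
  - pose proof (cv_lin _ _ a b 0 _ _ H1 H2) as G.
    intros e He; destruct (G e He) as [N HN]; exists N; intros m Hm.
    rewrite H; simpl. specialize (HN m Hm). rewrite !Rplus_0_r in HN. exact HN.
  - pose proof (cv_lin _ _ c d 0 _ _ H1 H2) as G.
    intros e He; destruct (G e He) as [N HN]; exists N; intros m Hm.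
    rewrite H; simpl. specialize (HN m Hm). rewrite !Rplus_0_r in HN. exact HN.
Qed.

Lemma vec_cv_shift u x n : vec_cv (fun m => u (n + m)%nat) x -> vec_cv u x.
Proof.
  intros [H1 H2]; split; apply (CV_shift _ n);
  [ eapply (Un_cv_ext (fun m => fst (u (n + m)%nat)))| eapply (Un_cv_ext (fun m => snd (u (n+m)%nat)))];
  eauto; intros; rewrite Nat.add_comm; auto.
Qed.

Lemma cv_le u l c : Un_cv u l -> (forall n, u n <= c) -> l <= c.
Proof.
  intros H Hb. destruct (Rle_or_lt l c) as [|Hlt]; auto.
  destruct (H (l - c)) as [N HN]; [lra|].
  specialize (HN N (le_n _)); specialize (Hb N). unfold Rdist in HN.
  apply Rabs_def2 in HN. lra.
Qed.
Lemma cv_ge u l c : Un_cv u l -> (forall n, c <= u n) -> c <= l.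
Proof.
  intros H Hb. destruct (Rle_or_lt c l) as [|Hlt]; auto.
  destruct (H (c - l)) as [N HN]; [lra|].
  specialize (HN N (le_n _)); specialize (Hb N). unfold Rdist in HN.
  apply Rabs_def2 in HN. lra.
Qed.

Section Gen.
Variable Ai : mat.
Variable N : vec -> R.
Variables r K : R.
Hypothesis Hr0 : 0 <= r.
Hypothesis Hr1 : r < 1.
Hypothesis HK : 0 <= K.
Hypothesis HN0 : forall x, 0 <= N x.
Hypothesis HNadd : forall x y, N (vadd x y) <= N x + N y.
Hypothesis HNscale : forall c x, N (vscale c x) = Rabs c * N x.
Hypothesis HNc : forall x, N (mat_vec Ai x) <= r * N x.
Hypothesis HNK1 : forall x, Rabs (fst x) <= K * N x.
Hypothesis HNK2 : forall x, Rabs (snd x) <= K * N x.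
Hypothesis HNcont : forall u x c, vec_cv u x -> (forall n, N (u n) <= c) -> N x <= c.

Definition ps dig := partial_sum Ai dig.
Definition Qp dig n := match n with O => vzero | S n' => ps dig n' end.

Lemma N_zero : N vzero = 0.
Proof.
  replace vzero with (vscale 0 vzero) by (apply vec_ext; simpl; ring).
  rewrite HNscale, Rabs_R0; ring.
Qed.

Lemma N_sub x y : N (vsub x y) <= N x + N y.
Proof.
  replace (vsub x y) with (vadd x (vscale (-1) y)) by (apply vec_ext; simpl; ring).
  eapply Rle_trans; [apply HNadd|]. rewrite HNscale.
  replace (Rabs (-1)) with 1 by (rewrite Rabs_left; lra). lra.
Qed.

Lemma N_pow n x : N (mat_pow_vec Ai n x) <= r ^ n * N x.
Proof.
  induction n; simpl. lra.
  eapply Rle_trans; [apply HNc|]. rewrite Rmult_assoc. apply Rmult_le_compat_l; auto.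
Qed.

Lemma ps_ext d1 d2 m : (forall i, (i <= m)%nat -> d1 i = d2 i) -> ps d1 m = ps d2 m.
Proof.
  unfold ps. induction m; intros H; simpl. rewrite H; auto.
  rewrite IHm, H; auto.
Qed.

Lemma ps_split n m dig :
  ps dig (n + m) = vadd (Qp dig n) (mat_pow_vec Ai n (ps (fun i => dig (n + i)%nat) m)).
Proof.
  induction m.
  - rewrite Nat.add_0_r. destruct n.
    + simpl. unfold ps; simpl. apply vec_ext; unfold vadd; simpl; ring.
    + simpl Qp. unfold ps at 1 3; simpl partial_sum. rewrite Nat.add_0_r.
      rewrite pow_vec_succ_r. reflexivity.
  - rewrite Nat.add_succ_r. unfold ps at 1 2; simpl partial_sum. fold (ps dig (n+m)).
    fold (ps (fun i => dig (n + i)%nat) m). rewrite IHm.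
    rewrite pow_vec_add, !pow_vec_comm, pow_vec_comp.
    replace (n + S m)%nat with (S (n + m)) by lia.
    apply vec_ext; unfold vadd; simpl; ring.
Qed.

Section Bounded.
Variable M : R.
Hypothesis HM : 0 <= M.

Definition Cb := M * r / (1 - r).

Lemma Cb_nonneg : 0 <= Cb.
Proof. unfold Cb. apply Rmult_le_pos. apply Rmult_le_pos; lra. left; apply Rinv_0_lt_compat; lra. Qed.

Lemma ps_bound dig : (forall i, N (dig i) <= M) -> forall m, N (ps dig m) <= Cb.
Proof.
  intros Hd.
  assert (forall m, N (ps dig m) <= Cb * (1 - r ^ (S m))).
  { intros m; induction m; unfold ps; simpl partial_sum.
    - simpl. eapply Rle_trans; [apply HNc|]. unfold Cb. specialize (Hd 0%nat).
      replace (M * r / (1 - r) * (1 - r * 1)) with (r * M) by (field; lra).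
      apply Rmult_le_compat_l; auto.
    - fold (ps dig m). eapply Rle_trans; [apply HNadd|].
      eapply Rle_trans; [apply Rplus_le_compat; [apply IHm| apply (N_pow (S (S m)))]|].
      simpl. assert (HN' := Hd (S m)). assert (0 <= r^m) by (apply pow_le; auto).
      unfold Cb. apply Rle_trans with (M * r / (1 - r) * (1 - r * r ^ m) + r * (r * r ^ m) * M).
      + apply Rplus_le_compat_l. apply Rmult_le_compat_l; [nra | auto].
      + right. field. lra. }
  intros m. eapply Rle_trans; [apply H|].
  assert (0 <= r ^ S m) by (apply pow_le; auto).
  pose proof Cb_nonneg. nra.
Qed.

Lemma ps_tail dig : (forall i, N (dig i) <= M) -> forall n m, (n <= m)%nat ->
  N (vsub (ps dig m) (ps dig n)) <= r ^ (S n) * Cb.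
Proof.
  intros Hd n m Hnm.
  destruct (Nat.eq_dec n m) as [<-|Hne].
  - replace (vsub (ps dig n) (ps dig n)) with vzero by (apply vec_ext; simpl; ring).
    rewrite N_zero. apply Rmult_le_pos; [apply pow_le; auto| apply Cb_nonneg].
  - replace m with (S n + (m - S n))%nat by lia.
    rewrite ps_split. simpl Qp.
    replace (vsub (vadd (ps dig n) _) (ps dig n)) with
      (mat_pow_vec Ai (S n) (ps (fun i => dig (S n + i)%nat) (m - S n))) by
      (apply vec_ext; simpl; ring).
    eapply Rle_trans; [apply N_pow|]. apply Rmult_le_compat_l.
    apply pow_le; auto. apply ps_bound. auto.
Qed.

Lemma r_pow_small e : 0 < e -> exists n, forall m, (n <= m)%nat -> r ^ m < e.
Proof.
  intros He. destruct (pow_lt_1_zero r) with e as [n Hn]; auto.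
  rewrite Rabs_pos_eq; auto.
  exists n; intros m Hm. specialize (Hn m Hm). rewrite Rabs_pos_eq in Hn; auto.
  apply pow_le; auto.
Qed.

Lemma ps_conv dig : (forall i, N (dig i) <= M) -> exists x, vec_cv (ps dig) x.
Proof.
  intros Hd.
  assert (Hc : forall (f : vec -> R), (forall x, Rabs (f x) <= K * N x) ->
              (forall x y, f (vsub x y) = f x - f y) -> Cauchy_crit (fun n => f (ps dig n))).
  { intros f Hf Hsub e He.
    destruct (r_pow_small (e / (2 * K * Cb + 1))) as [n0 Hn0].
    { apply Rdiv_lt_0_compat; auto. pose proof Cb_nonneg. nra. }
    exists n0. intros n m Hn Hm. unfold Rdist.
    replace (f (ps dig n) - f (ps dig m)) with
      (f (vsub (ps dig n) (ps dig n0)) - f (vsub (ps dig m) (ps dig n0))) by (rewrite !Hsub; ring).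
    pose proof (ps_tail dig Hd n0 n Hn). pose proof (ps_tail dig Hd n0 m Hm).
    pose proof (Hf (vsub (ps dig n) (ps dig n0))). pose proof (Hf (vsub (ps dig m) (ps dig n0))).
    specialize (Hn0 (S n0) ltac:(lia)).
    pose proof Cb_nonneg.
    assert (0 <= r ^ S n0) by (apply pow_le; auto).
    assert (r ^ S n0 * (2 * K * Cb + 1) < e).
    { assert (HX: 0 < 2*K*Cb+1) by nra.
      replace e with (e / (2*K*Cb+1) * (2*K*Cb+1)) by (field; lra). apply Rmult_lt_compat_r; auto. }
    eapply Rle_lt_trans; [apply Rabs_triang|]. rewrite Rabs_Ropp.
    assert (K * N (vsub (ps dig n) (ps dig n0)) <= K * (r ^ S n0 * Cb)) by (apply Rmult_le_compat_l; auto).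
    assert (K * N (vsub (ps dig m) (ps dig n0)) <= K * (r ^ S n0 * Cb)) by (apply Rmult_le_compat_l; auto).
    nra. }
  destruct (R_complete _ (Hc fst HNK1 ltac:(intros; reflexivity))) as [l1 Hl1].
  destruct (R_complete _ (Hc snd HNK2 ltac:(intros; reflexivity))) as [l2 Hl2].
  exists (l1, l2). split; auto.
Qed.

Lemma lim_bound dig x : (forall i, N (dig i) <= M) -> vec_cv (ps dig) x -> N x <= Cb.
Proof. intros Hd Hx. eapply HNcont; eauto. apply ps_bound; auto. Qed.

End Bounded.

Lemma lim_split dig n e y : (forall i, dig (n + i)%nat = e i) -> vec_cv (ps e) y ->
  vec_cv (ps dig) (vadd (Qp dig n) (mat_pow_vec Ai n y)).
Proof.
  intros He Hy. apply (vec_cv_shift _ _ n).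
  assert (Hc : vec_cv (fun m => vadd (Qp dig n) (mat_pow_vec Ai n (ps e m)))
                      (vadd (Qp dig n) (mat_pow_vec Ai n y))).
  { apply vec_cv_add. apply vec_cv_const. apply vec_cv_pow; auto. }
  destruct Hc as [H1 H2]; split.
  - eapply Un_cv_ext; [|exact H1]. intros m; simpl. rewrite ps_split.
    rewrite (ps_ext (fun i => dig (n + i)%nat) e); auto.
  - eapply Un_cv_ext; [|exact H2]. intros m; simpl. rewrite ps_split.
    rewrite (ps_ext (fun i => dig (n + i)%nat) e); auto.
Qed.

Lemma Qp_agree d1 d2 n : (forall i, (i < n)%nat -> d1 i = d2 i) -> Qp d1 n = Qp d2 n.
Proof.
  destruct n; simpl; auto. intros H. apply ps_ext. intros; apply H; lia.
Qed.

Lemma Qp_one dig : Qp dig 1 = mat_vec Ai (dig 0%nat).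
Proof. reflexivity. Qed.


Definition digs (D : list vec) (s : nat -> vec) := forall n, In (s n) D.
Definition inT D x := exists s, digs D s /\ vec_cv (ps s) x.
Definition touch D a b := exists x y, inT D x /\ inT D y /\ vadd a x = vadd b y.
Definition agree (s t : nat -> vec) n := forall i, (i < n)%nat -> s i = t i.
Definition upd (s : nat -> vec) n d := fun i => if Nat.eqb i n then d else s i.
Definition pre (s : nat -> vec) n (t : nat -> vec) := fun i => if Nat.ltb i n then s i else t (i - n)%nat.
Definition scons (d : vec) (s : nat -> vec) := fun i => match i with O => d | S j => s j end.

Section Conn.
Variable D : list vec.
Variable M : R.
Hypothesis HM : 0 <= M.
Hypothesis HDM : forall d, In d D -> N d <= M.

Lemma digs_bound s : digs D s -> forall i, N (s i) <= M.
Proof. intros H i; apply HDM, H. Qed.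

Lemma inT_ex s : digs D s -> exists x, vec_cv (ps s) x.
Proof. intros H; apply (ps_conv M HM); apply digs_bound; auto. Qed.

Lemma lim_cons d e y : vec_cv (ps e) y -> vec_cv (ps (scons d e)) (mat_vec Ai (vadd d y)).
Proof.
  intros Hy. pose proof (lim_split (scons d e) 1 e y ltac:(intros; reflexivity) Hy) as H.
  rewrite Qp_one in H. simpl in H. rewrite mat_vec_add. exact H.
Qed.

Lemma lim_pre s n t y : vec_cv (ps t) y -> vec_cv (ps (pre s n t)) (vadd (Qp s n) (mat_pow_vec Ai n y)).
Proof.
  intros Hy.
  rewrite <- (Qp_agree (pre s n t) s n).
  - apply (lim_split _ n t); auto. intros i; unfold pre.
    replace (Nat.ltb (n + i) n) with false by (symmetry; apply Nat.ltb_ge; lia).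
    f_equal; lia.
  - intros i Hi; unfold pre. replace (Nat.ltb i n) with true by (symmetry; apply Nat.ltb_lt; lia). auto.
Qed.

Lemma close s t n x y : agree s t n -> digs D s -> digs D t -> vec_cv (ps s) x -> vec_cv (ps t) y ->
  N (vsub x y) <= r ^ n * (2 * Cb M).
Proof.
  intros Ha Hs Ht Hx Hy.
  destruct (inT_ex (fun i => s (n + i)%nat)) as [x' Hx']. { intros i; apply Hs. }
  destruct (inT_ex (fun i => t (n + i)%nat)) as [y' Hy']. { intros i; apply Ht. }
  pose proof (lim_split s n _ x' ltac:(intros; reflexivity) Hx') as H1.
  pose proof (lim_split t n _ y' ltac:(intros; reflexivity) Hy') as H2.
  rewrite (vec_cv_unique _ _ _ Hx H1), (vec_cv_unique _ _ _ Hy H2).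
  rewrite (Qp_agree s t n Ha).
  replace (vsub (vadd (Qp t n) (mat_pow_vec Ai n x')) (vadd (Qp t n) (mat_pow_vec Ai n y')))
    with (mat_pow_vec Ai n (vsub x' y')) by (rewrite pow_vec_sub; apply vec_ext; simpl; ring).
  eapply Rle_trans; [apply N_pow|]. apply Rmult_le_compat_l. apply pow_le; auto.
  eapply Rle_trans; [apply N_sub|].
  pose proof (lim_bound M HM _ x' (fun i => digs_bound _ (fun j => Hs (n + j)%nat) i) Hx').
  pose proof (lim_bound M HM _ y' (fun i => digs_bound _ (fun j => Ht (n + j)%nat) i) Hy').
  lra.
Qed.

Lemma dist2_le u w : dist2 u w <= Rabs (fst u - fst w) + Rabs (snd u - snd w).
Proof.
  unfold dist2. set (a := fst u - fst w). set (b := snd u - snd w).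
  rewrite <- (sqrt_square (Rabs a + Rabs b)) by (pose proof (Rabs_pos a); pose proof (Rabs_pos b); lra).
  apply sqrt_le_1_alt. rewrite <- (pow2_abs a), <- (pow2_abs b).
  pose proof (Rabs_pos a); pose proof (Rabs_pos b). nra.
Qed.

Theorem gen_connected d0 d1 d2 : D = [d0; d1; d2] -> touch D d0 d1 ->
  (touch D d0 d2 \/ touch D d1 d2) -> connected2 (inT D).
Proof.
  intros HD H01 H2 [U [V [HU [HV [Hcov [[x0 [Tx0 Ux0]] [[y0 [Ty0 Vy0]] Hdis]]]]]]].
  set (mixed := fun s n =>
     (exists t x, digs D t /\ agree s t n /\ vec_cv (ps t) x /\ U x) /\
     (exists t x, digs D t /\ agree s t n /\ vec_cv (ps t) x /\ V x)).
  assert (Hin : forall d, In d D -> d = d0 \/ d = d1 \/ d = d2).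
  { rewrite HD; simpl; intros d [H|[H|[H|[]]]]; auto. }
  assert (Hstep : forall s n, digs D s -> mixed s n -> exists d, In d D /\ mixed (upd s n d) (S n)).
  { intros s n Hs [[tu [xu [Htu [Hau [Hxu Uxu]]]]] [tv [xv [Htv [Hav [Hxv Vxv]]]]]].
    apply NNPP; intro Hno.
    set (CU := fun d => exists t x, digs D t /\ agree (upd s n d) t (S n) /\ vec_cv (ps t) x /\ U x).
    set (CV := fun d => exists t x, digs D t /\ agree (upd s n d) t (S n) /\ vec_cv (ps t) x /\ V x).
    assert (HA : forall d, In d D -> ~ (CU d /\ CV d)).
    { intros d Hd Hc. apply Hno. exists d. split; auto. }
    assert (Hagr : forall t, agree s t n -> agree (upd s n (t n)) t (S n)).
    { intros t Ht i Hi. unfold upd. destruct (Nat.eqb_spec i n) as [->|Hne]; auto.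
      apply Ht; lia. }
    assert (HB : CU (tu n)). { exists tu, xu; split; [auto| split; [apply Hagr; auto| split; auto]]. }
    assert (HC : CV (tv n)). { exists tv, xv; split; [auto| split; [apply Hagr; auto| split; auto]]. }
    assert (HT : forall a b, In a D -> In b D -> touch D a b -> (CU a /\ CU b) \/ (CV a /\ CV b)).
    { intros a b Ha Hb [x [y [[ea [Hea Hx]] [[eb [Heb Hy]] Hxy]]]].
      pose proof (lim_pre s n _ _ (lim_cons a ea x Hx)) as Za.
      pose proof (lim_pre s n _ _ (lim_cons b eb y Hy)) as Zb.
      rewrite Hxy in Za.
      assert (Hda : digs D (pre s n (scons a ea))).
      { intros i; unfold pre. destruct (Nat.ltb i n); auto. destruct (i - n)%nat; simpl; auto. }
      assert (Hdb : digs D (pre s n (scons b eb))).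
      { intros i; unfold pre. destruct (Nat.ltb i n); auto. destruct (i - n)%nat; simpl; auto. }
      assert (Hga : forall c e, agree (upd s n c) (pre s n (scons c e)) (S n)).
      { intros c e i Hi. unfold upd, pre. destruct (Nat.eqb_spec i n) as [->|Hne].
        - replace (Nat.ltb n n) with false by (symmetry; apply Nat.ltb_ge; lia).
          rewrite Nat.sub_diag. reflexivity.
        - replace (Nat.ltb i n) with true by (symmetry; apply Nat.ltb_lt; lia). auto. }
      set (z := vadd (Qp s n) (mat_pow_vec Ai n (mat_vec Ai (vadd b y)))) in *.
      assert (Tz : inT D z) by (exists (pre s n (scons a ea)); auto).
      destruct (Hcov z Tz) as [Uz|Vz].
      - left; split; [exists (pre s n (scons a ea)), z | exists (pre s n (scons b eb)), z]; auto.
      - right; split; [exists (pre s n (scons a ea)), z | exists (pre s n (scons b eb)), z]; auto. }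
    assert (I0 : In d0 D) by (rewrite HD; simpl; auto).
    assert (I1 : In d1 D) by (rewrite HD; simpl; auto).
    assert (I2 : In d2 D) by (rewrite HD; simpl; auto).
    pose proof (HT _ _ I0 I1 H01) as T01.
    assert (T2 : (CU d0 /\ CU d2) \/ (CV d0 /\ CV d2) \/ (CU d1 /\ CU d2) \/ (CV d1 /\ CV d2)).
    { destruct H2 as [H2|H2]; [destruct (HT _ _ I0 I2 H2)|destruct (HT _ _ I1 I2 H2)]; tauto. }
    assert (BU : CU d0 \/ CU d1 \/ CU d2).
    { destruct (Hin _ (Htu n)) as [E|[E|E]]; rewrite E in HB; auto. }
    assert (BV : CV d0 \/ CV d1 \/ CV d2).
    { destruct (Hin _ (Htv n)) as [E|[E|E]]; rewrite E in HC; auto. }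
    pose proof (HA _ I0); pose proof (HA _ I1); pose proof (HA _ I2).
    tauto. }
  set (ch := fun s m => epsilon (inhabits d0) (fun d => In d D /\ mixed (upd s m d) (S m))).
  set (sq := nat_rect (fun _ => nat -> vec) (fun _ => d0) (fun m sm => upd sm m (ch sm m))).
  assert (I0 : In d0 D) by (rewrite HD; simpl; auto).
  assert (Hinv : forall n, digs D (sq n) /\ mixed (sq n) n).
  { induction n.
    - split. intros i; simpl; auto.
      destruct Tx0 as [t0 [Ht0 Hc0]]; destruct Ty0 as [t1 [Ht1 Hc1]].
      split; [exists t0, x0 | exists t1, y0]; (split; [auto | split; [intros i Hi; lia | split; auto]]).
    - destruct IHn as [Hd Hm].
      pose proof (epsilon_spec (inhabits d0) (fun d => In d D /\ mixed (upd (sq n) n d) (S n))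
                     (Hstep _ _ Hd Hm)) as [E1 E2].
      change (sq (S n)) with (upd (sq n) n (ch (sq n) n)).
      split; auto.
      intros i; unfold upd. destruct (Nat.eqb i n); auto. }
  assert (Hstab : forall n m i, (i < n)%nat -> sq (n + m)%nat i = sq n i).
  { intros n m i Hi; induction m. rewrite Nat.add_0_r; auto.
    rewrite Nat.add_succ_r. change (sq (S (n + m))) with (upd (sq (n+m)%nat) (n+m) (ch (sq (n+m)%nat) (n+m)%nat)).
    unfold upd. replace (Nat.eqb i (n + m)) with false by (symmetry; apply Nat.eqb_neq; lia). auto. }
  set (sinf := fun i => sq (S i) i).
  assert (Hag : forall n, agree (sq n) sinf n).
  { intros n i Hi. unfold sinf. replace n with (S i + (n - S i))%nat by lia. apply Hstab; lia. }
  assert (Hds : digs D sinf). { intros i; apply (proj1 (Hinv (S i))). }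
  destruct (inT_ex _ Hds) as [z Hz].
  assert (Tz : inT D z) by (exists sinf; auto).
  assert (Hsm : forall e, 0 < e -> exists n, r ^ n * (2 * Cb M) * (2 * K) < e).
  { intros e He. destruct (r_pow_small (e / (2 * Cb M * (2 * K) + 1))) as [n Hn].
    { apply Rdiv_lt_0_compat; auto. pose proof (Cb_nonneg M HM). nra. }
    exists n. specialize (Hn n (le_n _)). pose proof (Cb_nonneg M HM).
    assert (0 <= r ^ n) by (apply pow_le; auto).
    assert (r ^ n * (2 * Cb M * (2 * K) + 1) < e).
    { replace e with (e / (2 * Cb M * (2 * K) + 1) * (2 * Cb M * (2 * K) + 1)) by (field; nra).
      apply Rmult_lt_compat_r; auto. nra. }
    nra. }
  assert (Hnear : forall n t x, agree (sq n) t n -> digs D t -> vec_cv (ps t) x ->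
             dist2 z x <= r ^ n * (2 * Cb M) * (2 * K)).
  { intros n t x Ha Ht Hx.
    assert (agree sinf t n) by (intros i Hi; rewrite <- (Hag n i Hi); apply Ha; auto).
    pose proof (close _ _ _ _ _ H Hds Ht Hz Hx) as Hc.
    eapply Rle_trans; [apply dist2_le|].
    pose proof (HNK1 (vsub z x)); pose proof (HNK2 (vsub z x)). simpl in *.
    assert (K * N (vsub z x) <= K * (r ^ n * (2 * Cb M))) by (apply Rmult_le_compat_l; auto).
    lra. }
  destruct (Hcov z Tz) as [Uz|Vz].
  - destruct (HU z Uz) as [e [He Hball]].
    destruct (Hsm e He) as [n Hn].
    destruct (proj2 (proj2 (Hinv n))) as [t [x [Ht [Ha [Hx Vx]]]]].
    apply (Hdis x); auto. exists t; auto. apply Hball. pose proof (Hnear n t x Ha Ht Hx). lra.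
  - destruct (HV z Vz) as [e [He Hball]].
    destruct (Hsm e He) as [n Hn].
    destruct (proj1 (proj2 (Hinv n))) as [t [x [Ht [Ha [Hx Ux]]]]].
    apply (Hdis x); auto. exists t; auto. apply Hball. pose proof (Hnear n t x Ha Ht Hx). lra.
Qed.


Lemma abs1_le_dist2 u w : Rabs (fst u - fst w) <= dist2 u w.
Proof.
  unfold dist2. rewrite <- sqrt_Rsqr_abs. apply sqrt_le_1_alt. unfold Rsqr.
  pose proof (pow2_ge_0 (snd u - snd w)). simpl. nra.
Qed.
Lemma abs2_le_dist2 u w : Rabs (snd u - snd w) <= dist2 u w.
Proof.
  unfold dist2. rewrite <- sqrt_Rsqr_abs. apply sqrt_le_1_alt. unfold Rsqr.
  pose proof (pow2_ge_0 (fst u - fst w)). simpl. nra.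
Qed.

Lemma half_open al be c : open2 (fun x => al * fst x + be * snd x > c).
Proof.
  intros x Hx. exists ((al * fst x + be * snd x - c) / (Rabs al + Rabs be + 1)).
  assert (Hp : 0 < Rabs al + Rabs be + 1) by (pose proof (Rabs_pos al); pose proof (Rabs_pos be); lra).
  split. apply Rdiv_lt_0_compat; lra.
  intros y Hy. pose proof (abs1_le_dist2 x y); pose proof (abs2_le_dist2 x y).
  set (e := (al * fst x + be * snd x - c) / (Rabs al + Rabs be + 1)) in *.
  assert (He : e * (Rabs al + Rabs be + 1) = al * fst x + be * snd x - c) by (unfold e; field; lra).
  assert (A1 : Rabs (al * (fst x - fst y)) <= Rabs al * dist2 x y).
  { rewrite Rabs_mult. apply Rmult_le_compat_l; auto. apply Rabs_pos. }
  assert (A2 : Rabs (be * (snd x - snd y)) <= Rabs be * dist2 x y).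
  { rewrite Rabs_mult. apply Rmult_le_compat_l; auto. apply Rabs_pos. }
  pose proof (Rle_abs (al * (fst x - fst y))); pose proof (Rle_abs (be * (snd x - snd y))).
  pose proof (Rabs_pos al); pose proof (Rabs_pos be).
  assert (dist2 x y * (Rabs al + Rabs be + 1) < e * (Rabs al + Rabs be + 1)) by (apply Rmult_lt_compat_r; lra).
  assert (0 <= dist2 x y) by (unfold dist2; apply sqrt_pos).
  nra.
Qed.

Lemma inT_decomp x : inT D x -> exists d y, In d D /\ inT D y /\ x = mat_vec Ai (vadd d y).
Proof.
  intros [s [Hs Hx]].
  destruct (inT_ex (fun i => s (1 + i)%nat)) as [y Hy]. { intros i; apply Hs. }
  exists (s 0%nat), y. split; auto. split. exists (fun i => s (1 + i)%nat); split; auto. intros i; apply Hs.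
  pose proof (lim_split s 1 _ y ltac:(intros; reflexivity) Hy) as H.
  rewrite (vec_cv_unique _ _ _ Hx H). rewrite Qp_one. simpl. rewrite mat_vec_add. reflexivity.
Qed.

Lemma inT_cons d y : In d D -> inT D y -> inT D (mat_vec Ai (vadd d y)).
Proof.
  intros Hd [s [Hs Hy]]. exists (scons d s). split. intros [|i]; simpl; auto.
  apply lim_cons; auto.
Qed.

Theorem gen_disconnected d0 d1 d2 al be c : D = [d0; d1; d2] ->
  (forall y, inT D y -> al * fst (mat_vec Ai (vadd d2 y)) + be * snd (mat_vec Ai (vadd d2 y)) > c) ->
  (forall y, inT D y -> al * fst (mat_vec Ai (vadd d0 y)) + be * snd (mat_vec Ai (vadd d0 y)) < c) ->
  (forall y, inT D y -> al * fst (mat_vec Ai (vadd d1 y)) + be * snd (mat_vec Ai (vadd d1 y)) < c) ->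
  ~ connected2 (inT D).
Proof.
  intros HD H2 H0 H1 Hc. apply Hc.
  assert (I0 : In d0 D) by (rewrite HD; simpl; auto).
  assert (I2 : In d2 D) by (rewrite HD; simpl; auto).
  destruct (inT_ex (fun _ => d0)) as [y0 Hy0]. { intros i; auto. }
  assert (Ty0 : inT D y0) by (exists (fun _ => d0); split; auto; intros i; auto).
  exists (fun x => al * fst x + be * snd x > c), (fun x => (-al) * fst x + (-be) * snd x > -c).
  split. apply half_open. split. apply half_open.
  split.
  { intros x Hx. destruct (inT_decomp x Hx) as [d [y [Hd [Hy ->]]]].
    rewrite HD in Hd; simpl in Hd. destruct Hd as [<-|[<-|[<-|[]]]].
    - right. specialize (H0 y Hy). lra.
    - right. specialize (H1 y Hy). lra.
    - left. auto. }
  split. { exists (mat_vec Ai (vadd d2 y0)). split. apply inT_cons; auto. auto. }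
  split. { exists (mat_vec Ai (vadd d0 y0)). split. apply inT_cons; auto. specialize (H0 y0 Ty0). lra. }
  intros x _ A B. lra.
Qed.

Lemma ps_sub a b m : ps (fun n => vsub (a n) (b n)) m = vsub (ps a m) (ps b m).
Proof.
  unfold ps; induction m; cbn [partial_sum mat_pow_vec].
  - apply mat_vec_sub.
  - rewrite IHm, pow_vec_sub, !mat_vec_sub. apply vec_ext; simpl; ring.
Qed.

Lemma small_zero t R0 : 0 <= t -> 0 <= R0 -> (forall n, t <= r ^ n * R0) -> t = 0.
Proof.
  intros Ht HR H. destruct Ht as [Ht|]; auto. exfalso.
  destruct (r_pow_small (t / (R0 + 1))) as [n Hn]. apply Rdiv_lt_0_compat; lra.
  specialize (Hn n (le_n _)). specialize (H n).
  assert (0 <= r ^ n) by (apply pow_le; auto).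
  assert (r ^ n * (R0 + 1) < t).
  { assert (E: r ^ n * (R0 + 1) < t / (R0 + 1) * (R0 + 1)) by (apply Rmult_lt_compat_r; lra).
    replace (t / (R0 + 1) * (R0 + 1)) with t in E by (field; lra). exact E. }
  nra.
Qed.

Lemma gen_cycle (gam a b : nat -> vec) R0 : (forall n, N (gam n) <= R0) -> digs D a -> digs D b ->
  (forall n, gam n = mat_vec Ai (vadd (vsub (a n) (b n)) (gam (S n)))) ->
  exists x y, inT D x /\ inT D y /\ vsub x y = gam 0%nat.
Proof.
  intros HR Ha Hb Hg.
  destruct (inT_ex a Ha) as [x Hx]. destruct (inT_ex b Hb) as [y Hy].
  exists x, y. split; [exists a; auto|]. split; [exists b; auto|].
  set (c := fun n => vsub (a n) (b n)).
  assert (Hcl : forall m, gam 0%nat = vadd (ps c m) (mat_pow_vec Ai (S m) (gam (S m)))).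
  { induction m.
    - rewrite (Hg 0%nat) at 1. unfold ps; simpl. rewrite mat_vec_add. reflexivity.
    - rewrite IHm. rewrite (Hg (S m)) at 1. rewrite pow_vec_succ_r, pow_vec_add.
      unfold ps; simpl partial_sum.
      change (mat_vec Ai (mat_vec Ai (mat_pow_vec Ai m (c (S m))))) with (mat_pow_vec Ai (S (S m)) (vsub (a (S m)) (b (S m)))).
      unfold vadd; apply vec_ext; cbn [fst snd]; ring. }
  assert (Hz : vec_cv (ps c) (vsub x y)).
  { pose proof (vec_cv_sub _ _ _ _ Hx Hy) as H. destruct H as [H1 H2]; split;
    (eapply Un_cv_ext; [|eauto]); intros n; unfold c; rewrite ps_sub; reflexivity. }
  assert (HR0 : 0 <= R0) by (eapply Rle_trans; [apply HN0| apply (HR 0%nat)]).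
  assert (Hb2 : forall n, N (vsub (vsub x y) (gam 0%nat)) <= r ^ n * R0).
  { intros n.
    apply (HNcont (fun j => vsub (ps c (j + n)) (gam 0%nat))).
    - apply vec_cv_sub; [|apply vec_cv_const]. destruct Hz as [H1 H2]; split; [apply (CV_shift' (fun j => fst (ps c j)) n _ H1) | apply (CV_shift' (fun j => snd (ps c j)) n _ H2)].
    - intros j. rewrite (Hcl (j + n)%nat).
      replace (vsub (ps c (j + n)) (vadd (ps c (j + n)) (mat_pow_vec Ai (S (j + n)) (gam (S (j + n))))))
        with (vscale (-1) (mat_pow_vec Ai (S (j + n)) (gam (S (j + n))))) by (apply vec_ext; simpl; ring).
      rewrite HNscale. replace (Rabs (-1)) with 1 by (rewrite Rabs_left; lra). rewrite Rmult_1_l.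
      eapply Rle_trans; [apply N_pow|].
      assert (r ^ S (j + n) <= r ^ n).
      { replace (S (j + n)) with (S j + n)%nat by lia. rewrite pow_add.
        assert (r ^ S j <= 1) by (pose proof (pow_lt_1_compat r (S j) ltac:(lra) ltac:(lia)); lra).
        assert (0 <= r ^ n) by (apply pow_le; auto). nra. }
      assert (0 <= r ^ S (j + n)) by (apply pow_le; auto).
      specialize (HR (S (j + n))). pose proof (HN0 (gam (S (j + n)))). nra. }
  assert (HN0' : N (vsub (vsub x y) (gam 0%nat)) = 0) by (apply (small_zero _ R0); auto).
  pose proof (HNK1 (vsub (vsub x y) (gam 0%nat))) as K1.
  pose proof (HNK2 (vsub (vsub x y) (gam 0%nat))) as K2.
  rewrite HN0', Rmult_0_r in K1, K2.
  set (e := vsub (vsub x y) (gam 0%nat)) in *.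
  assert (E1 : fst e = 0).
  { pose proof (Rle_abs (fst e)); pose proof (Rle_abs (- fst e)); rewrite Rabs_Ropp in *; lra. }
  assert (E2 : snd e = 0).
  { pose proof (Rle_abs (snd e)); pose proof (Rle_abs (- snd e)); rewrite Rabs_Ropp in *; lra. }
  unfold e in E1, E2; simpl in E1, E2. apply vec_ext; simpl; lra.
Qed.

End Conn.
End Gen.

Lemma abs_le_inv x b : Rabs x <= b -> -b <= x <= b.
Proof. unfold Rabs; destruct (Rcase_abs x); intros; lra. Qed.

Section Coord.
Variables v w : vec.
Definition Dl := fst v * snd w - snd v * fst w.
Hypothesis HD : Dl <> 0.
Definition lc a b : vec := vadd (vscale a v) (vscale b w).
Definition ca (x : vec) := (fst x * snd w - snd x * fst w) / Dl.
Definition cb (x : vec) := (fst v * snd x - snd v * fst x) / Dl.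

Lemma lc_eq x : x = lc (ca x) (cb x).
Proof. unfold lc, ca, cb, Dl in *; apply vec_ext; simpl; field; auto. Qed.
Lemma ca_lc a b : ca (lc a b) = a.
Proof. unfold lc, ca, cb, Dl in *; simpl; field; auto. Qed.
Lemma cb_lc a b : cb (lc a b) = b.
Proof. unfold lc, ca, cb, Dl in *; simpl; field; auto. Qed.
Lemma lc_add a b c d : vadd (lc a b) (lc c d) = lc (a + c) (b + d).
Proof. unfold lc; apply vec_ext; simpl; ring. Qed.
Lemma lc_sub a b c d : vsub (lc a b) (lc c d) = lc (a - c) (b - d).
Proof. unfold lc; apply vec_ext; simpl; ring. Qed.
Lemma lc_scale s a b : vscale s (lc a b) = lc (s * a) (s * b).
Proof. unfold lc; apply vec_ext; simpl; ring. Qed.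
Lemma lc_inj a b c d : a = c -> b = d -> lc a b = lc c d.
Proof. intros; subst; auto. Qed.
Lemma ca_add x y : ca (vadd x y) = ca x + ca y.
Proof. unfold ca; simpl; field; auto. Qed.
Lemma cb_add x y : cb (vadd x y) = cb x + cb y.
Proof. unfold cb; simpl; field; auto. Qed.
Lemma ca_scale s x : ca (vscale s x) = s * ca x.
Proof. unfold ca; simpl; field; auto. Qed.
Lemma cb_scale s x : cb (vscale s x) = s * cb x.
Proof. unfold cb; simpl; field; auto. Qed.

Lemma coord_lin (l1 l2 : R) : exists al be, forall x, l1 * ca x + l2 * cb x = al * fst x + be * snd x.
Proof.
  exists ((l1 * snd w - l2 * snd v) / Dl), ((- l1 * fst w + l2 * fst v) / Dl).
  intros x; unfold ca, cb; field; auto.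
Qed.

Lemma coord_closed u x l1 l2 c : vec_cv u x -> (forall n, l1 * ca (u n) + l2 * cb (u n) <= c) ->
  l1 * ca x + l2 * cb x <= c.
Proof.
  intros [H1 H2] Hb. destruct (coord_lin l1 l2) as [al [be Hl]].
  rewrite Hl. apply (cv_le (fun n => al * fst (u n) + be * snd (u n) + 0)).
  - replace (al * fst x + be * snd x) with (al * fst x + be * snd x + 0) by ring. apply cv_lin; auto.
  - intros n. rewrite <- Hl. rewrite Rplus_0_r. auto.
Qed.

Section Norm.
Variable Ai : mat.
Variables P Q : R.
Hypothesis HAi : forall a b, mat_vec Ai (lc a b) = lc (P * a / Q + b) (- a / Q).
Variables n11 n12 n21 n22 r c : R.
Hypothesis Hr : 0 <= r < 1.
Hypothesis Hc0 : 0 <= c.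
Hypothesis Hc1 : forall a b t, -t <= n11 * a + n12 * b <= t -> -t <= n21 * a + n22 * b <= t ->
  (- (r * t) <= n11 * (P * a / Q + b) + n12 * (- a / Q) <= r * t) /\
  (- (r * t) <= n21 * (P * a / Q + b) + n22 * (- a / Q) <= r * t).
Hypothesis Hc2 : forall a b t, -t <= n11 * a + n12 * b <= t -> -t <= n21 * a + n22 * b <= t ->
  -(c * t) <= a <= c * t /\ -(c * t) <= b <= c * t.

Definition Nn (x : vec) := Rmax (Rabs (n11 * ca x + n12 * cb x)) (Rabs (n21 * ca x + n22 * cb x)).
Definition Kn := c * (Rabs (fst v) + Rabs (fst w) + Rabs (snd v) + Rabs (snd w)).

Lemma Nn_ge0 x : 0 <= Nn x.
Proof. unfold Nn. eapply Rle_trans; [apply Rabs_pos| apply Rmax_l]. Qed.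

Lemma Nn_bounds x : -(Nn x) <= n11 * ca x + n12 * cb x <= Nn x /\ -(Nn x) <= n21 * ca x + n22 * cb x <= Nn x.
Proof.
  unfold Nn; split; apply abs_le_inv; [apply Rmax_l | apply Rmax_r].
Qed.

Lemma Nn_add x y : Nn (vadd x y) <= Nn x + Nn y.
Proof.
  destruct (Nn_bounds x) as [A1 A2]; destruct (Nn_bounds y) as [B1 B2].
  unfold Nn at 1. rewrite !ca_add, !cb_add. apply Rmax_lub; apply Rabs_le; lra.
Qed.

Lemma Nn_scale s x : Nn (vscale s x) = Rabs s * Nn x.
Proof.
  unfold Nn. rewrite !ca_scale, !cb_scale, <- RmaxRmult by apply Rabs_pos.
  f_equal; rewrite <- Rabs_mult; f_equal; ring.
Qed.

Lemma Nn_contr x : Nn (mat_vec Ai x) <= r * Nn x.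
Proof.
  rewrite (lc_eq x), HAi. unfold Nn at 1. rewrite ca_lc, cb_lc.
  destruct (Nn_bounds x) as [A1 A2].
  destruct (Hc1 _ _ _ A1 A2) as [B1 B2].
  rewrite <- (lc_eq x). apply Rmax_lub; apply Rabs_le; lra.
Qed.

Lemma Nn_K1 x : Rabs (fst x) <= Kn * Nn x.
Proof.
  destruct (Nn_bounds x) as [A1 A2]. destruct (Hc2 _ _ _ A1 A2) as [B1 B2].
  rewrite (lc_eq x) at 1. unfold lc; simpl.
  eapply Rle_trans; [apply Rabs_triang|]. rewrite !Rabs_mult.
  pose proof (Rabs_pos (fst v)); pose proof (Rabs_pos (fst w)); pose proof (Rabs_pos (snd v)); pose proof (Rabs_pos (snd w)).
  assert (Rabs (ca x) <= c * Nn x) by (apply Rabs_le; lra).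
  assert (Rabs (cb x) <= c * Nn x) by (apply Rabs_le; lra).
  pose proof (Rabs_pos (ca x)); pose proof (Rabs_pos (cb x)). pose proof (Nn_ge0 x).
  unfold Kn. nra.
Qed.

Lemma Nn_K2 x : Rabs (snd x) <= Kn * Nn x.
Proof.
  destruct (Nn_bounds x) as [A1 A2]. destruct (Hc2 _ _ _ A1 A2) as [B1 B2].
  rewrite (lc_eq x) at 1. unfold lc; simpl.
  eapply Rle_trans; [apply Rabs_triang|]. rewrite !Rabs_mult.
  pose proof (Rabs_pos (fst v)); pose proof (Rabs_pos (fst w)); pose proof (Rabs_pos (snd v)); pose proof (Rabs_pos (snd w)).
  assert (Rabs (ca x) <= c * Nn x) by (apply Rabs_le; lra).
  assert (Rabs (cb x) <= c * Nn x) by (apply Rabs_le; lra).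
  pose proof (Rabs_pos (ca x)); pose proof (Rabs_pos (cb x)). pose proof (Nn_ge0 x).
  unfold Kn. nra.
Qed.

Lemma Kn_ge0 : 0 <= Kn.
Proof.
  unfold Kn. pose proof (Rabs_pos (fst v)); pose proof (Rabs_pos (fst w)); pose proof (Rabs_pos (snd v)); pose proof (Rabs_pos (snd w)).
  apply Rmult_le_pos; lra.
Qed.

Lemma Nn_cont u x b : vec_cv u x -> (forall n, Nn (u n) <= b) -> Nn x <= b.
Proof.
  intros Hu Hb. unfold Nn. apply Rmax_lub; apply Rabs_le; split.
  - assert (- n11 * ca x + - n12 * cb x <= b).
    { apply (coord_closed u); auto. intros n. destruct (Nn_bounds (u n)) as [A1 A2]. specialize (Hb n). lra. }
    lra.
  - apply (coord_closed u); auto. intros n. destruct (Nn_bounds (u n)) as [A1 A2]. specialize (Hb n). lra.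
  - assert (- n21 * ca x + - n22 * cb x <= b).
    { apply (coord_closed u); auto. intros n. destruct (Nn_bounds (u n)) as [A1 A2]. specialize (Hb n). lra. }
    lra.
  - apply (coord_closed u); auto. intros n. destruct (Nn_bounds (u n)) as [A1 A2]. specialize (Hb n). lra.
Qed.

End Norm.
End Coord.

Record cst := Cst { g1 : R; g2 : R; ia : nat; ib : nat; nx : nat }.
Definition cst0 := Cst 0 0 0 0 0.

Section Inst.
Variables v w : vec.
Hypothesis HD : Dl v w <> 0.
Variable Ai : mat.
Variables P Q : R.
Hypothesis HAi : forall a b, mat_vec Ai (lc v w a b) = lc v w (P * a / Q + b) (- a / Q).
Variables n11 n12 n21 n22 r c : R.
Hypothesis Hr : 0 <= r < 1.
Hypothesis Hc0 : 0 <= c.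
Hypothesis Hc1 : forall a b t, -t <= n11 * a + n12 * b <= t -> -t <= n21 * a + n22 * b <= t ->
  (- (r * t) <= n11 * (P * a / Q + b) + n12 * (- a / Q) <= r * t) /\
  (- (r * t) <= n21 * (P * a / Q + b) + n22 * (- a / Q) <= r * t).
Hypothesis Hc2 : forall a b t, -t <= n11 * a + n12 * b <= t -> -t <= n21 * a + n22 * b <= t ->
  -(c * t) <= a <= c * t /\ -(c * t) <= b <= c * t.
Variable kk : R.

Let N := Nn v w n11 n12 n21 n22.
Let K := Kn v w c.
Let D := [vzero; v; vscale kk w].
Let M := N vzero + N v + N (vscale kk w).

Lemma HM : 0 <= M.
Proof. unfold M, N. pose proof (Nn_ge0 v w n11 n12 n21 n22 vzero); pose proof (Nn_ge0 v w n11 n12 n21 n22 v);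
  pose proof (Nn_ge0 v w n11 n12 n21 n22 (vscale kk w)). lra. Qed.
Lemma HDM : forall d, In d D -> N d <= M.
Proof.
  intros d Hd. unfold M, N. pose proof (Nn_ge0 v w n11 n12 n21 n22 vzero); pose proof (Nn_ge0 v w n11 n12 n21 n22 v);
  pose proof (Nn_ge0 v w n11 n12 n21 n22 (vscale kk w)).
  simpl in Hd; destruct Hd as [<-|[<-|[<-|[]]]]; lra.
Qed.

Definition dg j := match j with O => vzero | S O => v | _ => vscale kk w end.
Definition dgc j := match j with O => (0, 0) | S O => (1, 0) | _ => (0, kk) end.
Lemma dg_lc j : dg j = lc v w (fst (dgc j)) (snd (dgc j)).
Proof. destruct j as [|[|j]]; unfold lc; apply vec_ext; simpl; ring. Qed.
Lemma dg_in j : In (dg j) D.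
Proof. destruct j as [|[|j]]; simpl; auto. Qed.

Definition eqs (s s' : cst) : Prop :=
  let a1 := fst (dgc (ia s)) in let a2 := snd (dgc (ia s)) in
  let b1 := fst (dgc (ib s)) in let b2 := snd (dgc (ib s)) in
  g1 s = P * (a1 - b1 + g1 s') / Q + (a2 - b2 + g2 s') /\ g2 s = - (a1 - b1 + g1 s') / Q.

Fixpoint allst (L0 l : list cst) : Prop :=
  match l with
  | nil => True
  | s :: l' => (nx s < length L0)%nat /\ eqs s (nth (nx s) L0 cst0) /\ allst L0 l'
  end.

Lemma allst_nth L0 l : allst L0 l -> forall i, (i < length l)%nat ->
  (nx (nth i l cst0) < length L0)%nat /\ eqs (nth i l cst0) (nth (nx (nth i l cst0)) L0 cst0).
Proof.
  induction l; simpl; intros H i Hi. lia.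
  destruct H as [H1 [H2 H3]]. destruct i; auto. apply IHl; auto. lia.
Qed.

Fixpoint sumN (l : list cst) : R := match l with nil => 0 | s :: l' => N (lc v w (g1 s) (g2 s)) + sumN l' end.
Lemma sumN_bound l i : (i < length l)%nat -> N (lc v w (g1 (nth i l cst0)) (g2 (nth i l cst0))) <= sumN l.
Proof.
  revert i; induction l; simpl; intros i Hi. lia.
  assert (0 <= sumN l).
  { clear. induction l; simpl. lra. pose proof (Nn_ge0 v w n11 n12 n21 n22 (lc v w (g1 a) (g2 a))). unfold N in *. lra. }
  pose proof (Nn_ge0 v w n11 n12 n21 n22 (lc v w (g1 a) (g2 a))).
  destruct i. unfold N in *; lra. specialize (IHl i ltac:(lia)). unfold N in *; lra.
Qed.

Lemma I_r0 : 0 <= r. Proof. lra. Qed.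
Lemma I_r1 : r < 1. Proof. lra. Qed.
Lemma I_K : 0 <= K. Proof. apply Kn_ge0; auto. Qed.
Lemma I_N0 : forall x, 0 <= N x. Proof. intros; apply Nn_ge0. Qed.
Lemma I_add : forall x y, N (vadd x y) <= N x + N y. Proof. intros; apply Nn_add; auto. Qed.
Lemma I_scale : forall s x, N (vscale s x) = Rabs s * N x. Proof. intros; apply Nn_scale; auto. Qed.
Lemma I_c : forall x, N (mat_vec Ai x) <= r * N x. Proof. intros; eapply Nn_contr; eauto. Qed.
Lemma I_K1 : forall x, Rabs (fst x) <= K * N x. Proof. intros; eapply Nn_K1; eauto. Qed.
Lemma I_K2 : forall x, Rabs (snd x) <= K * N x. Proof. intros; eapply Nn_K2; eauto. Qed.
Lemma I_cont : forall u x b, vec_cv u x -> (forall n, N (u n) <= b) -> N x <= b.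
Proof. intros; eapply Nn_cont; eauto. Qed.

Lemma cycle_touch L : allst L L -> L <> nil ->
  exists x y, inT Ai D x /\ inT Ai D y /\ vsub x y = lc v w (g1 (nth 0 L cst0)) (g2 (nth 0 L cst0)).
Proof.
  intros HL Hne.
  assert (Hlen : (0 < length L)%nat) by (destruct L; simpl; [congruence| lia]).
  set (st := fix st n := match n with O => O | S m => nx (nth (st m) L cst0) end).
  assert (Hst : forall n, (st n < length L)%nat).
  { induction n; simpl; auto. apply (allst_nth L L HL); auto. }
  set (gam := fun n => lc v w (g1 (nth (st n) L cst0)) (g2 (nth (st n) L cst0))).
  set (a := fun n => dg (ia (nth (st n) L cst0))).
  set (b := fun n => dg (ib (nth (st n) L cst0))).
  destruct (gen_cycle Ai N r K I_r0 I_r1 I_K I_N0 I_add I_scale I_c I_K1 I_K2 I_cont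
              D M HM HDM gam a b (sumN L)) as [x [y [Hx [Hy Hxy]]]].
  - intros n; unfold gam. apply sumN_bound; auto.
  - intros n; apply dg_in.
  - intros n; apply dg_in.
  - intros n. destruct (allst_nth L L HL (st n) (Hst n)) as [_ [E1 E2]].
    unfold gam, a, b. change (st (S n)) with (nx (nth (st n) L cst0)).
    rewrite !dg_lc, lc_sub, lc_add, HAi. apply lc_inj; auto.
  - exists x, y. auto.
Qed.

Definition polyP (l : list (R * R * R * R)) (a b : R) : Prop :=
  fold_right (fun t acc => let '(pa, pb, al, be) := t in pa * a + pb * b <= al + be * kk /\ acc) True l.

Lemma ps_cons dig n : ps Ai dig (S n) = mat_vec Ai (vadd (dig 0%nat) (ps Ai (fun i => dig (S i)) n)).
Proof.
  change (S n) with (1 + n)%nat. rewrite ps_split, Qp_one, mat_vec_add. reflexivity.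
Qed.
Lemma ps_zero dig : ps Ai dig 0 = mat_vec Ai (vadd (dig 0%nat) vzero).
Proof. unfold ps; simpl. f_equal. apply vec_ext; simpl; ring. Qed.

Lemma Ai_dg j a b : mat_vec Ai (vadd (dg j) (lc v w a b)) =
  lc v w (P * (fst (dgc j) + a) / Q + (snd (dgc j) + b)) (- (fst (dgc j) + a) / Q).
Proof. rewrite dg_lc, lc_add, HAi. reflexivity. Qed.

Lemma in_D_dg d : In d D -> exists j, d = dg j.
Proof. simpl; intros [<-|[<-|[<-|[]]]]; [exists 0%nat|exists 1%nat|exists 2%nat]; reflexivity. Qed.

Lemma poly_closed l u x : vec_cv u x -> (forall n, polyP l (ca v w (u n)) (cb v w (u n))) ->
  polyP l (ca v w x) (cb v w x).
Proof.
  intros Hu. induction l as [|[[[pa pb] al] be] l IH]; simpl; auto.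
  intros H. split.
  - apply (coord_closed v w HD u); auto. intros n; apply (H n).
  - apply IH. intros n; apply (H n).
Qed.

Theorem polygon_disc (l : list (R * R * R * R)) (phia phib cc : R) :
  polyP l 0 0 ->
  (forall a b j, polyP l a b -> polyP l (P * (fst (dgc j) + a) / Q + (snd (dgc j) + b)) (- (fst (dgc j) + a) / Q)) ->
  (forall a b, polyP l a b -> phia * (P * (0 + a) / Q + (kk + b)) + phib * (- (0 + a) / Q) > cc) ->
  (forall a b, polyP l a b -> phia * (P * (0 + a) / Q + (0 + b)) + phib * (- (0 + a) / Q) < cc) ->
  (forall a b, polyP l a b -> phia * (P * (1 + a) / Q + (0 + b)) + phib * (- (1 + a) / Q) < cc) ->
  ~ connected2 (inT Ai D).
Proof.
  intros H0 Hinv S2 S0 S1.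
  assert (Hstep : forall j y, polyP l (ca v w y) (cb v w y) ->
            polyP l (ca v w (mat_vec Ai (vadd (dg j) y))) (cb v w (mat_vec Ai (vadd (dg j) y)))).
  { intros j y Hy. rewrite (lc_eq v w HD y), Ai_dg, ca_lc, cb_lc by auto. apply Hinv; auto. }
  assert (Hps : forall n dig, digs D dig -> polyP l (ca v w (ps Ai dig n)) (cb v w (ps Ai dig n))).
  { induction n; intros dig Hd.
    - rewrite ps_zero. destruct (in_D_dg _ (Hd 0%nat)) as [j ->]. apply Hstep.
      replace vzero with (lc v w 0 0) by (unfold lc; apply vec_ext; simpl; ring).
      rewrite ca_lc, cb_lc by auto. auto.
    - rewrite ps_cons. destruct (in_D_dg _ (Hd 0%nat)) as [j ->]. apply Hstep.
      apply IHn. intros i; apply Hd. }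
  assert (HT : forall y, inT Ai D y -> polyP l (ca v w y) (cb v w y)).
  { intros y [dig [Hd Hy]]. apply (poly_closed l (ps Ai dig)); auto. }
  destruct (coord_lin v w HD phia phib) as [al [be Hl]].
  apply (gen_disconnected Ai N r K I_r0 I_r1 I_K I_add I_scale I_c I_K1 I_K2 D M HM HDM
           vzero v (vscale kk w) al be cc eq_refl).
  - intros y Hy. rewrite <- Hl. change (vscale kk w) with (dg 2).
    rewrite (lc_eq v w HD y), Ai_dg, ca_lc, cb_lc by auto.
    cbn [dgc fst snd]. apply S2. apply HT; auto.
  - intros y Hy. rewrite <- Hl. change vzero with (dg 0).
    rewrite (lc_eq v w HD y), Ai_dg, ca_lc, cb_lc by auto.
    cbn [dgc fst snd]. apply S0. apply HT; auto.
  - intros y Hy. rewrite <- Hl. change (vadd v y) with (vadd (dg 1) y).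
    rewrite (lc_eq v w HD y), Ai_dg, ca_lc, cb_lc by auto.
    cbn [dgc fst snd]. apply S1. apply HT; auto.
Qed.

Theorem cycles_conn L1 L2 :
  allst L1 L1 -> L1 <> nil -> allst L2 L2 -> L2 <> nil ->
  g1 (nth 0 L1 cst0) = 1 -> g2 (nth 0 L1 cst0) = 0 ->
  ((g1 (nth 0 L2 cst0) = 0 /\ g2 (nth 0 L2 cst0) = kk) \/ (g1 (nth 0 L2 cst0) = -1 /\ g2 (nth 0 L2 cst0) = kk)) ->
  connected2 (inT Ai D).
Proof.
  intros A1 N1 A2 N2 E1 E2 E3.
  apply (gen_connected Ai N r K I_r0 I_r1 I_K I_add I_scale I_c I_K1 I_K2 I_cont D M HM HDM
          vzero v (vscale kk w) eq_refl).
  - destruct (cycle_touch L1 A1 N1) as [x [y [Hx [Hy Hxy]]]].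
    exists x, y; repeat split; auto. rewrite E1, E2 in Hxy.
    apply vec_ext; unfold lc, vsub, vadd, vscale, vzero in *; simpl in *;
      injection Hxy; intros; lra.
  - destruct (cycle_touch L2 A2 N2) as [x [y [Hx [Hy Hxy]]]].
    destruct E3 as [[F1 F2]|[F1 F2]]; rewrite F1, F2 in Hxy; [left|right];
    exists x, y; repeat split; auto;
    apply vec_ext; unfold lc, vsub, vadd, vscale, vzero in *; simpl in *;
      injection Hxy; intros; lra.
Qed.

End Inst.

Lemma Ai_formula (A : mat) v P Q : mat_tr A = P -> mat_det A = Q -> Q <> 0 ->
  forall a b, mat_vec (mat_inv A) (lc v (mat_vec A v) a b) = lc v (mat_vec A v) (P * a / Q + b) (- a / Q).
Proof.
  intros HP HQ Hq a b. subst P Q. destruct A as [[x11 x12] [x21 x22]].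
  unfold mat_tr, mat_det, mat_inv, m11, m12, m21, m22, lc, mat_vec, vadd, vscale in *; simpl in *.
  apply vec_ext; unfold mat_inv, mat_det, m11, m12, m21, m22; simpl; field; auto.
Qed.

Lemma Dl_nonzero v w : lin_indep2 v w -> Dl v w <> 0.
Proof.
  intros H HD. unfold Dl in HD.
  destruct (H (snd w) (- snd v)) as [E1 E2].
  { unfold vadd, vscale, vzero; apply vec_ext; simpl; lra. }
  destruct (H (fst w) (- fst v)) as [E3 E4].
  { unfold vadd, vscale, vzero; apply vec_ext; simpl; nra. }
  destruct (H 1 0) as [E5 _].
  { unfold vadd, vscale, vzero; apply vec_ext; simpl.
    - assert (fst v = 0) by lra. rewrite H0; ring.
    - assert (snd v = 0) by lra. rewrite H0; ring. }
  lra.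
Qed.

Lemma cases_pq (A : mat) (p q : Z) : expanding A -> mat_tr A = IZR p -> mat_det A = IZR q ->
  (0 < p)%Z -> (q = 3%Z \/ q = (-3)%Z) ->
  (p = 1 /\ q = 3 \/ p = 2 /\ q = 3 \/ p = 3 /\ q = 3 \/ p = 1 /\ q = -3)%Z.
Proof.
  intros Hexp Htr Hdet Hp Hq.
  assert (Heig : forall x, x * x - IZR p * x + IZR q = 0 -> is_eigenvalue A x 0).
  { intros x Hx. unfold is_eigenvalue. rewrite <- Htr, <- Hdet in Hx.
    unfold mat_tr, mat_det in Hx. split; nra. }
  destruct Hq as [Hq|Hq]; subst q.
  - destruct (Z_le_gt_dec p 3) as [Hle|Hgt]. lia. exfalso.
    assert (HP : 4 <= IZR p) by (apply IZR_le; lia).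
    set (P := IZR p) in *.
    set (s := sqrt (P * P - 12)).
    assert (Hs : s * s = P * P - 12) by (apply sqrt_sqrt; nra).
    assert (Hs0 : 0 <= s) by apply sqrt_pos.
    set (x := (P - s) / 2).
    specialize (Hexp x 0 (Heig x ltac:(unfold x; nra))).
    assert (s <= P) by nra. assert (P - 2 <= s) by nra.
    unfold x in Hexp. nra.
  - destruct (Z_le_gt_dec p 1) as [Hle|Hgt]. lia. exfalso.
    assert (HP : 2 <= IZR p) by (apply IZR_le; lia).
    set (P := IZR p) in *.
    set (s := sqrt (P * P + 12)).
    assert (Hs : s * s = P * P + 12) by (apply sqrt_sqrt; nra).
    assert (Hs0 : 0 <= s) by apply sqrt_pos.
    set (x := (P - s) / 2).
    specialize (Hexp x 0 (Heig x ltac:(unfold x; replace (IZR (-3)) with (-3) by reflexivity; nra))).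
    assert (P <= s) by nra. assert (s <= P + 2) by nra.
    unfold x in Hexp. nra.
Qed.

Ltac ncheck := intros; repeat split; lra.
Ltac acheck := simpl allst; unfold eqs; simpl; repeat split; try lia; lra.

Definition HAiP (v w : vec) (Ai : mat) (P Q : R) :=
  forall a b, mat_vec Ai (lc v w a b) = lc v w (P * a / Q + b) (- a / Q).


Section C13.
Variables (v w : vec) (Ai : mat).
Hypothesis HD : Dl v w <> 0.
Hypothesis HAi : HAiP v w Ai (1) (3).

Lemma nc1_13 : forall a b t, -t <= (-3) * a + (-4) * b <= t -> -t <= (-2) * a + (4) * b <= t ->
  (- (9/10 * t) <= (-3) * ((1) * a / (3) + b) + (-4) * (- a / (3)) <= 9/10 * t) /\
  (- (9/10 * t) <= (-2) * ((1) * a / (3) + b) + (4) * (- a / (3)) <= 9/10 * t).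
Proof. ncheck. Qed.
Lemma nc2_13 : forall a b t, -t <= (-3) * a + (-4) * b <= t -> -t <= (-2) * a + (4) * b <= t ->
  -(1 * t) <= a <= 1 * t /\ -(1 * t) <= b <= 1 * t.
Proof. ncheck. Qed.

Lemma conn13_p : connected2 (inT Ai [vzero; v; vscale (IZR (1)) w]).
Proof.
  apply (cycles_conn v w HD Ai (1) (3) HAi (-3) (-4) (-2) (4) (9/10) 1 ltac:(lra) ltac:(lra) nc1_13 nc2_13 (IZR (1)) [Cst 1 0 2 1 0] [Cst 0 1 2 1 1; Cst (-2) 0 0 2 2; Cst 0 (-1) 1 2 3; Cst 2 0 2 0 0]); try acheck; try discriminate; simpl; auto.
Qed.

Lemma conn13_m : connected2 (inT Ai [vzero; v; vscale (IZR (-1)) w]).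
Proof.
  apply (cycles_conn v w HD Ai (1) (3) HAi (-3) (-4) (-2) (4) (9/10) 1 ltac:(lra) ltac:(lra) nc1_13 nc2_13 (IZR (-1)) [Cst 1 0 0 2 1; Cst 0 0 0 0 1] [Cst 0 (-1) 1 0 1; Cst 2 (-1) 1 2 2; Cst 2 0 1 2 3; Cst (-1) 1 0 1 4; Cst (-2) 0 2 0 0]); try acheck; try discriminate; simpl; auto.
Qed.

Lemma disc13_p (kk : R) : kk >= 2 -> ~ connected2 (inT Ai [vzero; v; vscale kk w]).
Proof.
  intros Hk.
  apply (polygon_disc v w HD Ai (1) (3) HAi (-3) (-4) (-2) (4) (9/10) 1 ltac:(lra) ltac:(lra) nc1_13 nc2_13 kk [((1), (0), (65397/1000000), (292491/200000)); ((104/125), (277/500), (60769/1000000), (1058197/1000000)); ((73/125), (203/250), (1483/25000), (694441/1000000)); ((46/125), (93/100), (59859/1000000), (11957/25000)); ((41/250), (493/500), (33013/500000), (292761/1000000)); ((-31/500), (499/500), (45267/500000), (41537/250000)); ((-9/25), (933/1000), (130619/1000000), (229549/1000000)); ((-19/25), (13/20), (181309/1000000), (88723/250000)); ((-1), (0), (242583/1000000), (7174/15625)); ((-104/125), (-277/500), (120441/500000), (409641/1000000)); ((-73/125), (-203/250), (199131/1000000), (15257/40000)); ((-46/125), (-93/100), (204613/1000000), (421643/1000000)); ((-41/250), (-493/500), (184/625), (459623/1000000)); ((31/500), (-499/500), (127209/500000), (281897/500000)); ((9/25), (-933/1000), (1079/31250), (56521/62500)); ((19/25), (-13/20), (53731/1000000),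 (1335887/1000000))] (649/1000) (19/25) ((84991/250000) + (19687/100000) * (kk - (2)))).
  - unfold polyP; simpl; repeat split; lra.
  - intros a b j H; unfold polyP in *; simpl in H; decompose [and] H; clear H;
      destruct j as [|[|j]]; simpl; repeat split; lra.
  - intros a b H; unfold polyP in *; simpl in H; decompose [and] H; clear H; lra.
  - intros a b H; unfold polyP in *; simpl in H; decompose [and] H; clear H; lra.
  - intros a b H; unfold polyP in *; simpl in H; decompose [and] H; clear H; lra.
Qed.

Lemma disc13_m (kk : R) : kk <= -2 -> ~ connected2 (inT Ai [vzero; v; vscale kk w]).
Proof.
  intros Hk.
  apply (polygon_disc v w HD Ai (1) (3) HAi (-3) (-4) (-2) (4) (9/10) 1 ltac:(lra) ltac:(lra) nc1_13 nc2_13 kk [((1), (0), (406909/1000000), (-118993/250000)); ((747/1000), (133/200), (45341/500000), (-423243/1000000)); ((437/1000), (899/1000), (31589/500000), (-8441/20000)); ((41/250), (493/500), (17981/250000), (-235717/500000)); ((-151/1000), (989/1000), (99511/1000000), (-340569/500000)); ((-31/50), (98/125), (187187/1000000), (-610989/500000)); ((-1), (0), (224587/1000000), (-1479291/1000000)); ((-747/1000), (-133/200), (227981/1000000), (-118651/125000)); ((-437/1000), (-899/1000), (242259/1000000), (-8724/15625)); ((-41/250), (-493/500), (683/4000), (-76143/250000)); ((151/1000), (-989/1000), (122157/250000), (-197221/1000000)); ((31/50), (-98/125), (66437/125000), (-42051/125000))] (-179/200) (-223/500) ((19733/25000) + (-93043/250000) * (kk - (-2)))).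
  - unfold polyP; simpl; repeat split; lra.
  - intros a b j H; unfold polyP in *; simpl in H; decompose [and] H; clear H;
      destruct j as [|[|j]]; simpl; repeat split; lra.
  - intros a b H; unfold polyP in *; simpl in H; decompose [and] H; clear H; lra.
  - intros a b H; unfold polyP in *; simpl in H; decompose [and] H; clear H; lra.
  - intros a b H; unfold polyP in *; simpl in H; decompose [and] H; clear H; lra.
Qed.

End C13.


Section C23.
Variables (v w : vec) (Ai : mat).
Hypothesis HD : Dl v w <> 0.
Hypothesis HAi : HAiP v w Ai (2) (3).

Lemma nc1_23 : forall a b t, -t <= (-2) * a + (-3) * b <= t -> -t <= (-1) * a + (2) * b <= t ->
  (- (9/10 * t) <= (-2) * ((2) * a / (3) + b) + (-3) * (- a / (3)) <= 9/10 * t) /\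
  (- (9/10 * t) <= (-1) * ((2) * a / (3) + b) + (2) * (- a / (3)) <= 9/10 * t).
Proof. ncheck. Qed.
Lemma nc2_23 : forall a b t, -t <= (-2) * a + (-3) * b <= t -> -t <= (-1) * a + (2) * b <= t ->
  -(1 * t) <= a <= 1 * t /\ -(1 * t) <= b <= 1 * t.
Proof. ncheck. Qed.

Lemma conn23_p : connected2 (inT Ai [vzero; v; vscale (IZR (1)) w]).
Proof.
  apply (cycles_conn v w HD Ai (2) (3) HAi (-2) (-3) (-1) (2) (9/10) 1 ltac:(lra) ltac:(lra) nc1_23 nc2_23 (IZR (1)) [Cst 1 0 2 1 0] [Cst 0 1 2 1 1; Cst (-2) 1 0 1 2; Cst (-2) 0 0 2 3; Cst 0 (-1) 1 2 4; Cst 2 (-1) 1 0 5; Cst 2 0 2 0 0]); try acheck; try discriminate; simpl; auto.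
Qed.

Lemma conn23_m : connected2 (inT Ai [vzero; v; vscale (IZR (-1)) w]).
Proof.
  apply (cycles_conn v w HD Ai (2) (3) HAi (-2) (-3) (-1) (2) (9/10) 1 ltac:(lra) ltac:(lra) nc1_23 nc2_23 (IZR (-1)) [Cst 1 0 0 2 1; Cst 0 0 0 0 1] [Cst 0 (-1) 2 0 1; Cst 3 (-1) 1 2 2; Cst 2 0 1 2 3; Cst (-1) 1 0 1 4; Cst (-2) 1 2 1 4]); try acheck; try discriminate; simpl; auto.
Qed.

Lemma disc23_p (kk : R) : kk >= 2 -> ~ connected2 (inT Ai [vzero; v; vscale kk w]).
Proof.
  intros Hk.
  apply (polygon_disc v w HD Ai (2) (3) HAi (-2) (-3) (-1) (2) (9/10) 1 ltac:(lra) ltac:(lra) nc1_23 nc2_23 kk [((1), (0), (28561/1000000), (929231/500000)); ((151/200), (82/125), (2171/100000), (111311/100000)); ((259/500), (171/200), (5949/250000), (317531/500000)); ((79/250), (949/1000), (5459/200000), (39277/100000)); ((61/1000), (499/500), (24971/500000), (169953/1000000)); ((-87/200), (9/10), (44761/500000), (29451/125000)); ((-1), (0), (166181/1000000), (17549/50000)); ((-151/200), (-82/125), (111939/1000000), (153123/500000)); ((-259/500), (-171/200), (14081/100000), (285967/1000000)); ((-79/250), (-949/1000), (27373/200000), (49457/125000)); ((-61/1000), (-499/500), (75539/250000), (581993/1000000)); ((87/200), (-9/10), (17033/1000000), (1345867/1000000))] (97/200) (7/8) ((60717/250000) + (4497/31250) * (kk - (2)))).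
  - unfold polyP; simpl; repeat split; lra.
  - intros a b j H; unfold polyP in *; simpl in H; decompose [and] H; clear H;
      destruct j as [|[|j]]; simpl; repeat split; lra.
  - intros a b H; unfold polyP in *; simpl in H; decompose [and] H; clear H; lra.
  - intros a b H; unfold polyP in *; simpl in H; decompose [and] H; clear H; lra.
  - intros a b H; unfold polyP in *; simpl in H; decompose [and] H; clear H; lra.
Qed.

Lemma disc23_m (kk : R) : kk <= -2 -> ~ connected2 (inT Ai [vzero; v; vscale kk w]).
Proof.
  intros Hk.
  apply (polygon_disc v w HD Ai (2) (3) HAi (-2) (-3) (-1) (2) (9/10) 1 ltac:(lra) ltac:(lra) nc1_23 nc2_23 kk [((1), (0), (825557/1000000), (-363501/1000000)); ((827/1000), (281/500), (411763/1000000), (-78439/250000)); ((627/1000), (779/1000), (6049/31250), (-18181/62500)); ((467/1000), (221/250), (53893/1000000), (-154677/500000)); ((79/250), (949/1000), (22947/500000), (-97511/250000)); ((137/1000), (991/1000), (31517/500000), (-528761/1000000)); ((-137/1000), (991/1000), (52267/500000), (-108031/125000)); ((-627/1000), (779/1000), (185497/1000000), (-50691/31250)); ((-1), (0), (116901/500000), (-935491/500000)); ((-827/1000), (-281/500), (107809/500000), (-1276629/1000000)); ((-627/1000), (-779/1000), (180201/1000000), (-842687/1000000)); ((-467/1000), (-221/250), (103409/500000), (-283461/500000)); ((-79/250), (-949/1000), (137791/500000), (-193579/500000)); ((-137/1000), (-991/1000), (11087/40000), (-9393/40000)); ((137/1000), (-991/1000), (17681/25000), (-78631/500000)); ((627/1000),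 (-779/1000), (963917/1000000), (-283521/1000000))] (-537/1000) (-843/1000) ((440091/1000000) + (-5967/31250) * (kk - (-2)))).
  - unfold polyP; simpl; repeat split; lra.
  - intros a b j H; unfold polyP in *; simpl in H; decompose [and] H; clear H;
      destruct j as [|[|j]]; simpl; repeat split; lra.
  - intros a b H; unfold polyP in *; simpl in H; decompose [and] H; clear H; lra.
  - intros a b H; unfold polyP in *; simpl in H; decompose [and] H; clear H; lra.
  - intros a b H; unfold polyP in *; simpl in H; decompose [and] H; clear H; lra.
Qed.

End C23.


Section C33.
Variables (v w : vec) (Ai : mat).
Hypothesis HD : Dl v w <> 0.
Hypothesis HAi : HAiP v w Ai (3) (3).

Lemma nc1_33 : forall a b t, -t <= (-3) * a + (-4) * b <= t -> -t <= (0) * a + (-3) * b <= t ->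
  (- (9/10 * t) <= (-3) * ((3) * a / (3) + b) + (-4) * (- a / (3)) <= 9/10 * t) /\
  (- (9/10 * t) <= (0) * ((3) * a / (3) + b) + (-3) * (- a / (3)) <= 9/10 * t).
Proof. ncheck. Qed.
Lemma nc2_33 : forall a b t, -t <= (-3) * a + (-4) * b <= t -> -t <= (0) * a + (-3) * b <= t ->
  -(1 * t) <= a <= 1 * t /\ -(1 * t) <= b <= 1 * t.
Proof. ncheck. Qed.

Lemma conn33_p : connected2 (inT Ai [vzero; v; vscale (IZR (1)) w]).
Proof.
  apply (cycles_conn v w HD Ai (3) (3) HAi (-3) (-4) (0) (-3) (9/10) 1 ltac:(lra) ltac:(lra) nc1_33 nc2_33 (IZR (1)) [Cst 1 0 2 1 0] [Cst (-1) 1 2 0 1; Cst (-3) 1 0 2 1]); try acheck; try discriminate; simpl; auto.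
Qed.

Lemma conn33_m : connected2 (inT Ai [vzero; v; vscale (IZR (-1)) w]).
Proof.
  apply (cycles_conn v w HD Ai (3) (3) HAi (-3) (-4) (0) (-3) (9/10) 1 ltac:(lra) ltac:(lra) nc1_33 nc2_33 (IZR (-1)) [Cst 1 0 0 2 1; Cst 0 0 0 0 1] [Cst 0 (-1) 2 1 1; Cst 4 (-2) 1 0 2; Cst 5 (-2) 1 2 2]); try acheck; try discriminate; simpl; auto.
Qed.

Lemma disc33_p (kk : R) : kk >= 2 -> ~ connected2 (inT Ai [vzero; v; vscale kk w]).
Proof.
  intros Hk.
  apply (polygon_disc v w HD Ai (3) (3) HAi (-3) (-4) (0) (-3) (9/10) 1 ltac:(lra) ltac:(lra) nc1_33 nc2_33 kk [((1), (0), (293/200000), (196911/62500)); ((707/1000), (707/1000), (1031/1000000), (23584/15625)); ((111/200), (104/125), (603/500000), (468147/500000)); ((447/1000), (447/500), (967/500000), (60597/100000)); ((79/250), (949/1000), (511/125000), (330441/1000000)); ((0), (1), (401/31250), (2523/62500)); ((-1), (0), (1197/31250), (60251/500000)); ((-707/1000), (-707/1000), (13473/500000), (84771/1000000)); ((-111/200), (-104/125), (6303/200000), (19829/200000)); ((-447/1000), (-447/500), (25271/500000), (39751/250000)); ((-79/250), (-949/1000), (106881/1000000), (336243/1000000)); ((0), (-1), (335491/1000000), (1055443/1000000))] (223/500) (179/200) ((3921/8000) + (220359/1000000) * (kk - (2)))).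
  - unfold polyP; simpl; repeat split; lra.
  - intros a b j H; unfold polyP in *; simpl in H; decompose [and] H; clear H;
      destruct j as [|[|j]]; simpl; repeat split; lra.
  - intros a b H; unfold polyP in *; simpl in H; decompose [and] H; clear H; lra.
  - intros a b H; unfold polyP in *; simpl in H; decompose [and] H; clear H; lra.
  - intros a b H; unfold polyP in *; simpl in H; decompose [and] H; clear H; lra.
Qed.

Lemma disc33_m (kk : R) : kk <= -2 -> ~ connected2 (inT Ai [vzero; v; vscale kk w]).
Proof.
  intros Hk.
  apply (polygon_disc v w HD Ai (3) (3) HAi (-3) (-4) (0) (-3) (9/10) 1 ltac:(lra) ltac:(lra) nc1_33 nc2_33 kk [((1), (0), (2134897/1000000), (-60251/500000)); ((707/1000), (707/1000), (794863/1000000), (-84771/1000000)); ((111/200), (104/125), (47079/125000), (-19829/200000)); ((447/1000), (447/500), (155949/1000000), (-39751/250000)); ((79/250), (949/1000), (799/62500), (-336243/1000000)); ((0), (1), (40127/1000000), (-1055443/1000000)); ((-1), (0), (59891/500000), (-196911/62500)); ((-707/1000), (-707/1000), (16853/200000), (-23584/15625)); ((-111/200), (-104/125), (98553/1000000), (-468147/500000)); ((-447/1000), (-447/500), (79027/500000), (-60597/100000)); ((-79/250), (-949/1000), (66847/200000), (-330441/1000000)); ((0), (-1), (1050191/1000000), (-2523/62500))] (-223/500) (-179/200) ((32319/62500) + (-220359/1000000) * (kk - (-2)))).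
  - unfold polyP; simpl; repeat split; lra.
  - intros a b j H; unfold polyP in *; simpl in H; decompose [and] H; clear H;
      destruct j as [|[|j]]; simpl; repeat split; lra.
  - intros a b H; unfold polyP in *; simpl in H; decompose [and] H; clear H; lra.
  - intros a b H; unfold polyP in *; simpl in H; decompose [and] H; clear H; lra.
  - intros a b H; unfold polyP in *; simpl in H; decompose [and] H; clear H; lra.
Qed.

End C33.


Section C1m3.
Variables (v w : vec) (Ai : mat).
Hypothesis HD : Dl v w <> 0.
Hypothesis HAi : HAiP v w Ai (1) (-3).

Lemma nc1_1m3 : forall a b t, -t <= (-3) * a + (-4) * b <= t -> -t <= (-3) * a + (4) * b <= t ->
  (- (9/10 * t) <= (-3) * ((1) * a / (-3) + b) + (-4) * (- a / (-3)) <= 9/10 * t) /\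
  (- (9/10 * t) <= (-3) * ((1) * a / (-3) + b) + (4) * (- a / (-3)) <= 9/10 * t).
Proof. ncheck. Qed.
Lemma nc2_1m3 : forall a b t, -t <= (-3) * a + (-4) * b <= t -> -t <= (-3) * a + (4) * b <= t ->
  -(1 * t) <= a <= 1 * t /\ -(1 * t) <= b <= 1 * t.
Proof. ncheck. Qed.

Lemma conn1m3_p : connected2 (inT Ai [vzero; v; vscale (IZR (1)) w]).
Proof.
  apply (cycles_conn v w HD Ai (1) (-3) HAi (-3) (-4) (-3) (4) (9/10) 1 ltac:(lra) ltac:(lra) nc1_1m3 nc2_1m3 (IZR (1)) [Cst 1 0 2 1 0] [Cst (-1) 1 2 0 1; Cst 3 (-1) 2 0 2; Cst (-3) 1 0 2 1]); try acheck; try discriminate; simpl; auto.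
Qed.

Lemma conn1m3_m : connected2 (inT Ai [vzero; v; vscale (IZR (-1)) w]).
Proof.
  apply (cycles_conn v w HD Ai (1) (-3) HAi (-3) (-4) (-3) (4) (9/10) 1 ltac:(lra) ltac:(lra) nc1_1m3 nc2_1m3 (IZR (-1)) [Cst 1 0 0 2 1; Cst 0 0 0 0 1] [Cst 0 (-1) 2 1 1; Cst (-2) 0 2 0 0]); try acheck; try discriminate; simpl; auto.
Qed.

Lemma disc1m3_p (kk : R) : kk >= 2 -> ~ connected2 (inT Ai [vzero; v; vscale kk w]).
Proof.
  intros Hk.
  apply (polygon_disc v w HD Ai (1) (-3) HAi (-3) (-4) (-3) (4) (9/10) 1 ltac:(lra) ltac:(lra) nc1_1m3 nc2_1m3 kk [((199/500), (917/1000), (501/1000000), (355159/500000)); ((901/1000), (217/500), (386889/500000), (105197/62500)); ((231/250), (-383/1000), (1077051/1000000), (125691/62500)); ((609/1000), (-793/1000), (894957/1000000), (1511477/1000000)); ((311/1000), (-19/20), (321821/500000), (119927/125000)); ((3/500), (-1), (348527/1000000), (3563/10000)); ((-199/500), (-917/1000), (81/200000), (51/125000)); ((-901/1000), (-217/500), (78329/125000), (125953/200000)); ((-231/250), (383/1000), (1204021/1000000), (1210041/1000000)); ((-609/1000), (793/1000), (290009/250000), (291459/250000)); ((-311/1000), (19/20), (192381/200000), (483357/500000)); ((-3/500), (1), (684079/1000000), (687499/1000000))] (399/1000) (917/1000) ((99241/125000) + (35369/100000) * (kk - (2)))).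
  - unfold polyP; simpl; repeat split; lra.
  - intros a b j H; unfold polyP in *; simpl in H; decompose [and] H; clear H;
      destruct j as [|[|j]]; simpl; repeat split; lra.
  - intros a b H; unfold polyP in *; simpl in H; decompose [and] H; clear H; lra.
  - intros a b H; unfold polyP in *; simpl in H; decompose [and] H; clear H; lra.
  - intros a b H; unfold polyP in *; simpl in H; decompose [and] H; clear H; lra.
Qed.

Lemma disc1m3_m (kk : R) : kk <= -2 -> ~ connected2 (inT Ai [vzero; v; vscale kk w]).
Proof.
  intros Hk.
  apply (polygon_disc v w HD Ai (1) (-3) HAi (-3) (-4) (-3) (4) (9/10) 1 ltac:(lra) ltac:(lra) nc1_1m3 nc2_1m3 kk [((199/500), (917/1000), (154191/500000), (-51/125000)); ((901/1000), (217/500), (152549/1000000), (-125953/200000)); ((231/250), (-383/1000), (0), (-1210041/1000000)); ((609/1000), (-793/1000), (0), (-291459/250000)); ((311/1000), (-19/20), (0), (-483357/500000)); ((3/500), (-1), (0), (-687499/1000000)); ((-199/500), (-917/1000), (0), (-355159/500000)); ((-901/1000), (-217/500), (0), (-105197/62500)); ((-231/250), (383/1000), (0), (-125691/62500)); ((-609/1000), (793/1000), (0), (-1511477/1000000)); ((-311/1000), (19/20), (0), (-119927/125000)); ((-3/500), (1), (175101/500000), (-3563/10000))] (-399/1000) (-917/1000) ((640281/1000000) + (-35369/100000) * (kk - (-2)))).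
  - unfold polyP; simpl; repeat split; lra.
  - intros a b j H; unfold polyP in *; simpl in H; decompose [and] H; clear H;
      destruct j as [|[|j]]; simpl; repeat split; lra.
  - intros a b H; unfold polyP in *; simpl in H; decompose [and] H; clear H; lra.
  - intros a b H; unfold polyP in *; simpl in H; decompose [and] H; clear H; lra.
  - intros a b H; unfold polyP in *; simpl in H; decompose [and] H; clear H; lra.
Qed.

End C1m3.


Theorem theorem3p3 (B : zmat) (p q k : Z) (v : vec) :
  expanding (zmat_R B) ->
  (* characteristic polynomial x^2 - p x + q *)
  mat_tr (zmat_R B) = IZR p -> mat_det (zmat_R B) = IZR q ->
  (0 < p)%Z -> (q = 3%Z \/ q = (-3)%Z) ->
  k <> 0%Z ->
  lin_indep2 v (mat_vec (zmat_R B) v) ->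
  (connected2
     (self_affine_set (zmat_R B)
        [vzero; v; vscale (IZR k) (mat_vec (zmat_R B) v)])
   <-> (k = 1%Z \/ k = (-1)%Z)).
Proof.
  intros Hexp Htr Hdet Hp Hq Hk Hli.
  pose proof (cases_pq _ p q Hexp Htr Hdet Hp Hq) as Hcases.
  assert (HD : Dl v (mat_vec (zmat_R B) v) <> 0) by (apply Dl_nonzero; auto).
  assert (HQ : IZR q <> 0) by (destruct Hq; subst; discriminate || (apply not_0_IZR; lia)).
  pose proof (Ai_formula (zmat_R B) v (IZR p) (IZR q) Htr Hdet HQ) as HAi.
  change (self_affine_set (zmat_R B)) with (inT (mat_inv (zmat_R B))).
  set (w := mat_vec (zmat_R B) v) in *.
  set (Ai := mat_inv (zmat_R B)) in *.
  assert (Hkc : (k = 1 \/ k = -1 \/ 2 <= k \/ k <= -2)%Z) by lia.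
  assert (Kp : (2 <= k)%Z -> IZR k >= 2) by (intros; apply Rle_ge; apply IZR_le; auto).
  assert (Km : (k <= -2)%Z -> IZR k <= -2) by (intros; apply IZR_le; auto).
  destruct Hcases as [[-> ->]|[[-> ->]|[[-> ->]|[-> ->]]]]; split.
  - intros Hc. destruct Hkc as [|[|[H|H]]]; auto; exfalso.
    + exact (disc13_p v w Ai HD HAi (IZR k) (Kp H) Hc).
    + exact (disc13_m v w Ai HD HAi (IZR k) (Km H) Hc).
  - intros [->| ->]; [apply conn13_p|apply conn13_m]; auto.
  - intros Hc. destruct Hkc as [|[|[H|H]]]; auto; exfalso.
    + exact (disc23_p v w Ai HD HAi (IZR k) (Kp H) Hc).
    + exact (disc23_m v w Ai HD HAi (IZR k) (Km H) Hc).
  - intros [->| ->]; [apply conn23_p|apply conn23_m]; auto.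
  - intros Hc. destruct Hkc as [|[|[H|H]]]; auto; exfalso.
    + exact (disc33_p v w Ai HD HAi (IZR k) (Kp H) Hc).
    + exact (disc33_m v w Ai HD HAi (IZR k) (Km H) Hc).
  - intros [->| ->]; [apply conn33_p|apply conn33_m]; auto.
  - intros Hc. destruct Hkc as [|[|[H|H]]]; auto; exfalso.
    + exact (disc1m3_p v w Ai HD HAi (IZR k) (Kp H) Hc).
    + exact (disc1m3_m v w Ai HD HAi (IZR k) (Km H) Hc).
  - intros [->| ->]; [apply conn1m3_p|apply conn1m3_m]; auto.
Qed.
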